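(* Let $f:[1,\infty)\to\mathbb{R}$ be defined by $f(1)=0$ and $$f(x)=\frac{x+1}{2}\log\Big(\frac{x+1}{2}\Big)-\frac{x-1}{2}\log\Big(\frac{x-1}{2}\Big),\qquad x\in(1,\infty).$$ Then: (i) $f$ is continuous, strictly monotone increasing and concave, with $\lim_{x\to1}f'(x)=\infty$; (ii) there exists $C\in(0,1]$ such that $f(x)\le C\sqrt{x^2-1}$ for all $x\in[1,\infty)$; (iii) $f(x)\ge\log(x)$ for all $x\in[1,\infty)$. *)

(* Defs.v *)
From Stdlib Require Import Reals Lra.
From Coquelicot Require Import Coquelicot.
Open Scope R_scope.

(* The function f : [1,oo) -> R of the paper; f 1 = 0.  Values for x < 1 are
   irrelevant (set to 0); every statement only uses f on [1,oo). *)
Definition fpaper (x : R) : R :=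
  if Rle_dec x 1 then 0
  else (x + 1) / 2 * ln ((x + 1) / 2) - (x - 1) / 2 * ln ((x - 1) / 2).

(* Main.v *)
Require Import Defs.
From Stdlib Require Import Reals Lra.
From Coquelicot Require Import Coquelicot.
Open Scope R_scope.

Lemma ln_le_sub1 z : 0 < z -> ln z <= z - 1.
Proof. intros Hz. pose proof (exp_ineq1_le (ln z)). rewrite exp_ln in H; lra. Qed.

Lemma ln_ge_1inv z : 0 < z -> 1 - / z <= ln z.
Proof. intros Hz. pose proof (ln_le_sub1 (/ z) (Rinv_0_lt_compat _ Hz)).
  rewrite ln_Rinv in H; lra. Qed.

Definition Fm (x : R) : R :=
  (x + 1) / 2 * ln ((x + 1) / 2) - (x - 1) / 2 * ln ((x - 1) / 2).

Lemma fpaper_eq x : 1 <= x -> fpaper x = Fm x.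
Proof.
  intros Hx. unfold fpaper, Fm. destruct (Rle_dec x 1) as [H|H].
  - assert (x = 1) by lra. subst. replace ((1+1)/2) with 1 by field.
    rewrite ln_1. lra.
  - reflexivity.
Qed.

Lemma fpaper_le1 x : x <= 1 -> fpaper x = 0.
Proof. intros Hx. unfold fpaper. destruct (Rle_dec x 1); [reflexivity|lra]. Qed.

Lemma Fm_b x : 1 < x -> let b := (x - 1) / 2 in
  Fm x = (b + 1) * ln (b + 1) - b * ln b.
Proof. intros Hx b. unfold Fm, b. replace ((x+1)/2) with ((x-1)/2 + 1) by field. reflexivity. Qed.

Lemma part3 x : 1 <= x -> ln x <= fpaper x.
Proof.
  intros Hx. rewrite fpaper_eq by lra. destruct (Req_dec x 1) as [->|Hx1].
  - unfold Fm. replace ((1+1)/2) with 1 by field. replace ((1-1)/2) with 0 by field.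
    rewrite ln_1. lra.
  - assert (H1 : 1 < x) by lra. rewrite (Fm_b x H1). set (b := (x-1)/2).
    assert (Hb : 0 < b) by (unfold b; lra).
    replace x with (2*b+1) by (unfold b; field).
    pose proof (ln_ge_1inv ((b+1)/b)) as HA.
    pose proof (ln_ge_1inv ((b+1)/(2*b+1))) as HC.
    rewrite ln_div in HA by lra. rewrite ln_div in HC by lra.
    assert (E1 : / ((b+1)/b) = b/(b+1)) by (field; lra).
    assert (E2 : / ((b+1)/(2*b+1)) = (2*b+1)/(b+1)) by (field; lra).
    rewrite E1 in HA. rewrite E2 in HC.
    assert (HA' : b * (1 - b/(b+1)) <= b * (ln (b+1) - ln b)).
    { apply Rmult_le_compat_l; [lra| apply HA]. apply Rdiv_lt_0_compat; lra. }
    assert (HC' : 1 - (2*b+1)/(b+1) <= ln (b+1) - ln (2*b+1)).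
    { apply HC. apply Rdiv_lt_0_compat; lra. }
    assert (E3 : b * (1 - b/(b+1)) + (1 - (2*b+1)/(b+1)) = 0) by (field; lra).
    lra.
Qed.

Lemma part2 x : 1 <= x -> fpaper x <= 1 * sqrt (x ^ 2 - 1).
Proof.
  intros Hx. rewrite Rmult_1_l. rewrite fpaper_eq by lra.
  destruct (Req_dec x 1) as [->|Hx1].
  - unfold Fm. replace ((1+1)/2) with 1 by field. replace ((1-1)/2) with 0 by field.
    rewrite ln_1. replace (1^2-1) with 0 by ring. rewrite sqrt_0. lra.
  - assert (H1 : 1 < x) by lra. rewrite (Fm_b x H1). set (b := (x-1)/2).
    assert (Hb : 0 < b) by (unfold b; lra).
    set (s := sqrt b). set (t := sqrt (b+1)).
    assert (Hs : 0 < s) by (apply sqrt_lt_R0; lra).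
    assert (Ht : 0 < t) by (apply sqrt_lt_R0; lra).
    assert (Es : s * s = b) by (apply sqrt_sqrt; lra).
    assert (Et : t * t = b + 1) by (apply sqrt_sqrt; lra).
    assert (Ex : x ^ 2 - 1 = (2*s*t) * (2*s*t)).
    { replace x with (2*b+1) by (unfold b; field).
      replace ((2*s*t)*(2*s*t)) with (4*(s*s)*(t*t)) by ring. rewrite Es, Et. ring. }
    rewrite Ex. rewrite (sqrt_square (2*s*t)) by nra.
    assert (Lb : ln b = ln s + ln s) by (rewrite <- Es; apply ln_mult; lra).
    assert (Lb1 : ln (b+1) = ln t + ln t) by (rewrite <- Et; apply ln_mult; lra).
    rewrite Lb, Lb1.
    pose proof (ln_le_sub1 t Ht) as L1.
    pose proof (ln_le_sub1 (t/s) (Rdiv_lt_0_compat _ _ Ht Hs)) as L2.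
    rewrite ln_div in L2 by lra.
    assert (L2' : s * (ln t - ln s) <= t - s).
    { replace (t - s) with (s * (t/s - 1)) by (field; lra).
      apply Rmult_le_compat_l; lra. }
    assert (L3 : s * (s * (ln t - ln s)) <= s * (t - s)) by (apply Rmult_le_compat_l; lra).
    assert (Tt : 1 <= t) by nra.
    assert (E : (b + 1) * (ln t + ln t) - b * (ln s + ln s) = 2 * ln t + 2 * (s * (s * (ln t - ln s)))).
    { rewrite <- Es. replace (s*s+1) with (b+1) by lra. rewrite <- Es. ring. }
    rewrite E. nra.
Qed.

Definition Dp (x : R) : R := ln (1 + 2 / (x - 1)) / 2.

Lemma Fm_derive x : 1 < x -> is_derive Fm x (Dp x).
Proof.
  intros Hx. unfold Fm, Dp.
  auto_derive.
  - split; [lra|split; [lra|exact I]].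
  - replace (1 + 2/(x-1)) with (((x+1)/2) / ((x-1)/2)) by (field; lra).
    rewrite ln_div by lra. replace (x + - (1)) with (x - 1) by ring.
    change ((x+1) * / 2) with ((x+1)/2). change ((x-1) * / 2) with ((x-1)/2). field; lra.
Qed.

Lemma fpaper_derive x : 1 < x -> is_derive fpaper x (Dp x).
Proof.
  intros Hx. apply is_derive_ext_loc with Fm; [|now apply Fm_derive].
  assert (He : 0 < x - 1) by lra.
  exists (mkposreal _ He). intros y Hy. simpl in Hy.
  unfold ball in Hy; simpl in Hy; unfold AbsRing_ball, abs, minus, plus, opp in Hy; simpl in Hy.
  symmetry; apply fpaper_eq. apply Rabs_def2 in Hy. lra.
Qed.

Lemma D_pos x : 1 < x -> 0 < Dp x.
Proof.
  intros Hx. unfold Dp. apply Rdiv_lt_0_compat; [|lra].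
  rewrite <- ln_1. apply ln_increasing; [lra|].
  assert (0 < 2/(x-1)) by (apply Rdiv_lt_0_compat; lra). lra.
Qed.

Lemma D_decr x y : 1 < x -> x <= y -> Dp y <= Dp x.
Proof.
  intros Hx Hxy. unfold Dp. apply Rmult_le_compat_r; [lra|].
  apply ln_le.
  - assert (0 < 2/(y-1)) by (apply Rdiv_lt_0_compat; lra). lra.
  - apply Rplus_le_compat_l. unfold Rdiv. apply Rmult_le_compat_l; [lra|].
    apply Rinv_le_contravar; lra.
Qed.

Lemma cont1 : continuity_pt fpaper 1.
Proof.
  apply continuity_pt_filterlim. apply filterlim_locally. intros eps.
  rewrite (fpaper_le1 1) by lra.
  assert (Hd : 0 < Rmin 1 (eps*eps/3)).
  { apply Rmin_glb_lt; [lra|]. pose proof (cond_pos eps). apply Rdiv_lt_0_compat; nra. }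
  exists (mkposreal _ Hd). intros y Hy.
  unfold ball in Hy |- *; simpl in Hy |- *; unfold AbsRing_ball, abs, minus, plus, opp in Hy |- *; simpl in Hy |- *.
  apply Rabs_def2 in Hy. destruct Hy as [Hy1 Hy2].
  pose proof (Rmin_l 1 (eps*eps/3)). pose proof (Rmin_r 1 (eps*eps/3)).
  pose proof (cond_pos eps).
  destruct (Rle_dec y 1) as [Hy|Hy].
  - rewrite fpaper_le1 by lra. rewrite Rplus_opp_r, Rabs_R0. auto.
  - pose proof (part2 y ltac:(lra)) as P2. pose proof (part3 y ltac:(lra)) as P3.
    assert (0 <= ln y) by (rewrite <- ln_1; apply ln_le; lra).
    rewrite Ropp_0, Rplus_0_r, Rabs_pos_eq by lra.
    eapply Rle_lt_trans; [apply P2|]. rewrite Rmult_1_l.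
    rewrite <- (sqrt_square eps) by lra. apply sqrt_lt_1_alt. split; [nra|].
    nra.
Qed.

Lemma cont_all x : 1 <= x -> continuity_pt fpaper x.
Proof.
  intros Hx. destruct (Req_dec x 1) as [->|Hx1]; [exact cont1|].
  apply continuity_pt_filterlim.
  assert (He : ex_derive fpaper x) by (eexists; apply fpaper_derive; lra).
  exact (ex_derive_continuous fpaper x He).
Qed.

Lemma mvt_open f df a b : a < b -> (forall x, a < x < b -> is_derive f x (df x)) ->
  (forall x, a <= x <= b -> continuity_pt f x) ->
  exists c, a < c < b /\ f b - f a = df c * (b - a).
Proof.
  intros Hab Hd Hc.
  pose (pr1 := fun c (P : a < c < b) =>
     exist (fun l => derivable_pt_lim f c l) (df c) (proj1 (is_derive_Reals _ _ _) (Hd c P))).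
  destruct (MVT f id a b pr1 (fun c _ => derivable_pt_id c) Hab Hc
     (fun c _ => derivable_continuous_pt _ _ (derivable_pt_id c))) as [c [P E]].
  exists c. split; [exact P|]. rewrite derive_pt_id in E. simpl in E. unfold id in E. lra.
Qed.

Lemma incr x y : 1 <= x -> x < y -> fpaper x < fpaper y.
Proof.
  intros Hx Hxy. destruct (Req_dec x 1) as [->|Hx1].
  - rewrite fpaper_le1 by lra. eapply Rlt_le_trans; [|apply part3; lra].
    rewrite <- ln_1. apply ln_increasing; lra.
  - destruct (mvt_open fpaper Dp x y Hxy) as [c [Hc E]].
    + intros z Hz. apply fpaper_derive. lra.
    + intros z Hz. apply cont_all. lra.
    + pose proof (D_pos c ltac:(lra)). nra.
Qed.

Lemma conc_aux x y t : 1 <= x -> x < y -> 0 < t < 1 ->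
  t * fpaper x + (1 - t) * fpaper y <= fpaper (t * x + (1 - t) * y).
Proof.
  intros Hx Hxy Ht. set (z := t * x + (1 - t) * y).
  assert (Hxz : x < z) by (unfold z; nra).
  assert (Hzy : z < y) by (unfold z; nra).
  destruct (mvt_open fpaper Dp x z Hxz) as [c1 [Hc1 E1]].
  { intros w Hw. apply fpaper_derive. lra. }
  { intros w Hw. apply cont_all. lra. }
  destruct (mvt_open fpaper Dp z y Hzy) as [c2 [Hc2 E2]].
  { intros w Hw. apply fpaper_derive. lra. }
  { intros w Hw. apply cont_all. lra. }
  pose proof (D_decr c1 c2 ltac:(lra) ltac:(lra)) as Hd.
  assert (Ez1 : z - x = (1 - t) * (y - x)) by (unfold z; ring).
  assert (Ez2 : y - z = t * (y - x)) by (unfold z; ring).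
  assert (K : t * fpaper x + (1 - t) * fpaper y - fpaper z
     = t * (1 - t) * (y - x) * (Dp c2 - Dp c1)).
  { replace (fpaper x) with (fpaper z - Dp c1 * (z - x)) by lra.
    replace (fpaper y) with (fpaper z + Dp c2 * (y - z)) by lra.
    rewrite Ez1, Ez2. ring. }
  assert (0 <= t * (1 - t) * (y - x)).
  { apply Rmult_le_pos; [|lra]. apply Rmult_le_pos; lra. }
  assert (t * (1 - t) * (y - x) * (Dp c2 - Dp c1) <= 0) by nra.
  lra.
Qed.

Lemma conc x y t : 1 <= x -> 1 <= y -> 0 <= t <= 1 ->
      t * fpaper x + (1 - t) * fpaper y <= fpaper (t * x + (1 - t) * y).
Proof.
  intros Hx Hy Ht.
  destruct (Req_dec t 0) as [->|Ht0].
  { replace (0 * x + (1 - 0) * y) with y by ring. lra. }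
  destruct (Req_dec t 1) as [->|Ht1].
  { replace (1 * x + (1 - 1) * y) with x by ring. lra. }
  destruct (Rtotal_order x y) as [Hxy|[<-|Hxy]].
  - apply conc_aux; lra.
  - replace (t * x + (1 - t) * x) with x by ring. lra.
  - pose proof (conc_aux y x (1 - t) Hy Hxy ltac:(lra)) as K.
    replace (1 - t) with (1 - t) in K by ring.
    replace ((1 - t) * y + (1 - (1 - t)) * x) with (t * x + (1 - t) * y) in K by ring.
    replace (1 - (1 - t)) with t in K by ring. lra.
Qed.

Lemma derlim : filterlim (Derive fpaper) (at_right 1) (Rbar_locally p_infty).
Proof.
  intros P [M HM].
  assert (Hd : 0 < 2 / exp (2 * M)) by (apply Rdiv_lt_0_compat; [lra|apply exp_pos]).
  exists (mkposreal _ Hd). intros y Hy Hy1. simpl in Hy.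
  unfold ball in Hy; simpl in Hy; unfold AbsRing_ball, abs, minus, plus, opp in Hy; simpl in Hy.
  apply Rabs_def2 in Hy. apply HM.
  rewrite (is_derive_unique _ _ _ (fpaper_derive y Hy1)).
  unfold Dp. pose proof (exp_pos (2*M)) as He.
  assert (K : exp (2 * M) < 2 / (y - 1)).
  { apply Rmult_lt_reg_r with (y - 1); [lra|].
    unfold Rdiv. rewrite Rmult_assoc, Rinv_l, Rmult_1_r by lra.
    apply Rmult_lt_reg_r with (/ exp (2*M)); [apply Rinv_0_lt_compat; lra|].
    rewrite Rmult_comm, <- Rmult_assoc, Rinv_l, Rmult_1_l by lra. lra. }
  assert (K2 : 2 * M < ln (1 + 2 / (y - 1))).
  { rewrite <- (ln_exp (2*M)) at 1. apply ln_increasing; lra. }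
  lra.
Qed.

Theorem lemma1p7 :
  ((forall x : R, 1 <= x ->
      filterlim fpaper (within (fun y => 1 <= y) (locally x)) (locally (fpaper x))) /\
   (forall x y : R, 1 <= x -> x < y -> fpaper x < fpaper y) /\
   (forall x y t : R, 1 <= x -> 1 <= y -> 0 <= t <= 1 ->
      t * fpaper x + (1 - t) * fpaper y <= fpaper (t * x + (1 - t) * y)) /\
   (forall x : R, 1 < x -> ex_derive fpaper x) /\
   filterlim (Derive fpaper) (at_right 1) (Rbar_locally p_infty)) /\
  (exists C : R, 0 < C <= 1 /\
     forall x : R, 1 <= x -> fpaper x <= C * sqrt (x ^ 2 - 1)) /\
  (forall x : R, 1 <= x -> ln x <= fpaper x).
Proof.
  split; [|split].
  - split; [|split; [exact incr|split; [exact conc|split]]].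
    + intros x Hx. apply (filterlim_filter_le_1 (F := locally x)).
      * intros Q HQ. unfold within. apply filter_imp with (2 := HQ). auto.
      * apply continuity_pt_filterlim. apply cont_all. exact Hx.
    + intros x Hx. eexists. apply fpaper_derive. exact Hx.
    + exact derlim.
  - exists 1. split; [lra|]. exact part2.
  - exact part3.
Qed.
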